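(* Let $h:\mathbb R^m\times\mathcal U\to\mathbb R^m$ satisfy: (i) for each $u\in\mathcal U$ the map $\Gamma_u:x\mapsto x+h(x,u)$ is a homeomorphism of $\mathbb R^m$, and its inverse $\Lambda_u$ satisfies, for a constant $K>0$, $|\Lambda_u(x)|\le K(1+|x|)$ and $|\Lambda_u(x)-\Lambda_u(y)|\le K|x-y|$ for all $x,y\in\mathbb R^m$, $u\in\mathcal U$; (ii) there exist $\sigma>0$ and $K_0\ge e$ such that for every $p\ge1$ there is a constant $C(p)$ with $$\int_{\mathcal U}|h(x,u)-h(y,u)|^{2p}\mu(du)\le C(p)\log N|x-y|^{2p}+C(p)\frac{\log N}{N^{2\sigma p}}$$ for every integer $N>K_0$ and all $|x|,|y|\le N$. For $\varepsilon>0$ set $F(x)=(\varepsilon+|x|^2)^{-1}$. Then: (1) $F(x-x'+h(x,u)-h(x',u))\le(1+K^2)F(x-x')$ for all $x,x'\in\mathbb R^m$, $u\in\mathcal U$; (2) there is a constant $c'$ independent of $\varepsilon$ such that for every integer $N>K_0$ and all $|x|,|x'|\le N$, $$\int_{\mathcal U}\Big[F(x-x'+h(x,u)-h(x',u))-F(x-x')-\langle\nabla F(x-x'),h(x,u)-h(x',u)\rangle\Big]\mu(du)\le c'\Big\{\log N\,F(x-x')+\log N\frac{F^2(x-x')}{N^{2\sigma}}+\log N\frac{F^{5/2}(x-x')}{N^{3\sigma}}\Big\}.$$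
   Context: $\mathcal U$ is a metric space with a $\sigma$-finite measure $\mu$; $|\cdot|$ is the Euclidean norm. (In the paper, condition (ii) is part of a larger assumption that also includes local Lipschitz-type bounds on $f$ and $g$; only the $h$-part enters this lemma.) *)

(* Defs.v *)
From HB Require Import structures.
From mathcomp Require Import all_boot all_order all_algebra.
From mathcomp Require Import all_classical all_reals all_analysis.
Set Implicit Arguments. Unset Strict Implicit. Unset Printing Implicit Defensive.
Import Order.TTheory GRing.Theory Num.Theory.
Import numFieldNormedType.Exports.
Local Open Scope ring_scope.

Definition enorm (R : realType) (m : nat) (v : 'rV[R]_m) : R :=
  Num.sqrt (\sum_(i < m) (v 0 i) ^+ 2).

Definition Feps (R : realType) (m : nat) (eps : R) (x : 'rV[R]_m) : R :=
  (eps + enorm x ^+ 2)^-1.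

(* Main.v *)
Require Import Defs.
From HB Require Import structures.
From mathcomp Require Import all_boot all_order all_algebra.
From mathcomp Require Import all_classical all_reals all_analysis.
From mathcomp Require Import ring lra.
Import Order.TTheory GRing.Theory Num.Theory.
Import numFieldNormedType.Exports.
Local Open Scope classical_set_scope.
Local Open Scope ring_scope.

Section Helpers.
Variables (R : realType) (m : nat).
Implicit Types (y v : 'rV[R]_m).

Definition dotv y v : R := \sum_(i < m) y 0 i * v 0 i.

Lemma enorm_ge0 y : 0 <= enorm y.
Proof. exact: sqrtr_ge0. Qed.

Lemma enorm2 y : enorm y ^+ 2 = \sum_(i < m) (y 0 i) ^+ 2.
Proof. by rewrite /enorm sqr_sqrtr // sumr_ge0 // => i _; exact: sqr_ge0. Qed.

Lemma enorm_expand t v y :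
  enorm (t *: v + y) ^+ 2 = enorm y ^+ 2 + 2 * t * dotv y v + t ^+ 2 * enorm v ^+ 2.
Proof.
rewrite !enorm2 /dotv mulr_sumr mulr_sumr -!big_split /=.
by apply: eq_bigr => i _; rewrite !mxE; ring.
Qed.

Lemma enorm_add y v :
  enorm (y + v) ^+ 2 = enorm y ^+ 2 + 2 * dotv y v + enorm v ^+ 2.
Proof. by rewrite addrC -[v]scale1r enorm_expand scale1r mulr1 expr1n mul1r. Qed.

Lemma enorm0P y : enorm y = 0 -> forall i, y 0 i = 0.
Proof.
move=> /(congr1 (fun r => r ^+ 2)); rewrite enorm2 expr0n /= => /eqP.
rewrite psumr_eq0 => [/allP H i|i _]; last exact: sqr_ge0.
by have := H i (mem_index_enum _); rewrite sqrf_eq0 => /eqP.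
Qed.

Lemma dot_le y v : dotv y v <= enorm y * enorm v.
Proof.
have [e0|yn0] := eqVneq (enorm y) 0.
  by rewrite e0 mul0r /dotv big1// => i _; rewrite (enorm0P y e0) mul0r.
have [e0|vn0] := eqVneq (enorm v) 0.
  by rewrite e0 mulr0 /dotv big1// => i _; rewrite (enorm0P v e0) mulr0.
have H : 0 <= \sum_(i < m) (enorm v * y 0 i - enorm y * v 0 i) ^+ 2.
  by apply: sumr_ge0 => i _; exact: sqr_ge0.
have E : \sum_(i < m) (enorm v * y 0 i - enorm y * v 0 i) ^+ 2 =
   2 * (enorm y * enorm v) * (enorm y * enorm v - dotv y v).
  transitivity (enorm v ^+ 2 * (\sum_(i < m) (y 0 i) ^+ 2)
     + enorm y ^+ 2 * (\sum_(i < m) (v 0 i) ^+ 2)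
       - 2 * (enorm y * enorm v) * dotv y v); last by rewrite -!enorm2; ring.
  rewrite /dotv !mulr_sumr -big_split -sumrB /=.
  by apply: eq_bigr => i _; ring.
have p : 0 < 2 * (enorm y * enorm v).
  by rewrite mulr_gt0 // mulr_gt0 // lt_neqAle eq_sym ?yn0 ?vn0 enorm_ge0.
by move: H; rewrite E pmulr_rge0 // subr_ge0.
Qed.

Lemma dot_sq y v : dotv y v ^+ 2 <= enorm y ^+ 2 * enorm v ^+ 2.
Proof.
have h1 := dot_le y v.
have h2 : - dotv y v <= enorm y * enorm v.
  have := dot_le y (- v).
  have -> : dotv y (-v) = - dotv y v.
    by rewrite /dotv -sumrN; apply: eq_bigr => i _; rewrite mxE mulrN.
  suff -> : enorm (- v) = enorm v by [].
  by rewrite /enorm; congr Num.sqrt; apply: eq_bigr => i _; rewrite mxE sqrrN.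
have := enorm_ge0 y; have := enorm_ge0 v; nra.
Qed.


Lemma Feps_D (eps : R) y v : 0 < eps ->
  'D_v (Feps eps) y = - (2 * dotv y v) * Feps eps y ^+ 2.
Proof.
move=> e0.
pose a := eps + enorm y ^+ 2.
have a0 : 0 < a by rewrite /a ltr_pwDl // sqr_ge0.
pose p : {poly R} := a%:P + (2 * dotv y v)%:P * 'X + (enorm v ^+ 2)%:P * 'X^2.
have Hp t : Feps eps (t *: v + y) = (p.[t])^-1.
  rewrite /Feps enorm_expand /p !hornerD !hornerM !hornerC ?hornerX ?hornerXn /a; congr (_^-1); ring.
have -> : 'D_v (Feps eps) y = 'D_1 (fun t => (p.[t])^-1) 0.
  rewrite /derive /=.
  have -> : (fun h : R => h^-1 *: (Feps eps (h *: v + y) - Feps eps y)) =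
     (fun h : R => h^-1 *: (p.[h%:A + 0]^-1 - p.[0]^-1)) => //.
  apply/funext => t.
  have H0 := Hp 0; rewrite scale0r add0r in H0.
  by rewrite Hp H0 addr0 -[t%:A]/(t * 1) mulr1.
have pa : p.[0] = a.
  by rewrite /p !hornerD !hornerM !hornerC ?hornerX ?hornerXn mul0r !mulr0 !addr0.
rewrite (deriveV (f:=horner p)); last 2 first.
- by rewrite pa; apply/lt0r_neq0.
- exact: derivable_horner.
have -> : 'D_1 (horner p) 0 = p^`().[0] by rewrite derive_val.
have -> : Feps eps y = a^-1 by [].
rewrite pa /p !derivD !derivM !derivC !derivX ?derivXn.
rewrite !hornerD !hornerM !hornerC ?hornerX ?hornerXn mul1r mulr1 hornerD !hornerX.
rewrite -[_ *: _]/(_ * _).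
have an : a != 0 by apply/lt0r_neq0.
by field.
Qed.

End Helpers.
Arguments dotv {R m}.
Arguments enorm_ge0 {R m}.
Arguments enorm2 {R m}.
Arguments enorm_add {R m}.
Arguments dot_le {R m}.
Arguments dot_sq {R m}.
Arguments Feps_D {R m}.

Ltac pos := repeat first [assumption | apply: mulr_ge0 | apply: exprn_ge0 | apply: addr_ge0 | apply: normr_ge0 | apply: ltW ].

Section R1.
Variable R : realType.

Lemma ptw (a b d S D z k : R) : 0 < a -> 0 < b -> b = a + 2 * d + S ->
  S = D ^+ 2 -> 0 <= D -> 0 <= z -> d ^+ 2 <= z ^+ 2 * S -> d <= z * D ->
  b^-1 <= k * a^-1 ->
  b^-1 - a^-1 - (- (2 * d) * a^-1 ^+ 2) <= k * a^-1 ^+ 3 * (4 * z ^+ 2 * S + 2 * z * D ^+ 3).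
Proof.
move=> a0 b0 bE SE D0 z0 dS dD bk.
have ia0 : 0 < a^-1 by rewrite invr_gt0.
have ib0 : 0 < b^-1 by rewrite invr_gt0.
have E : b^-1 - a^-1 - (- (2 * d) * a^-1 ^+ 2) =
   (4 * d ^+ 2 + 2 * d * S - a * S) * (a^-1 ^+ 2 * b^-1).
  rewrite bE; field; apply/andP; split; apply/lt0r_neq0 => //; by rewrite -bE.
rewrite E.
set N := 4 * d ^+ 2 + 2 * d * S.
set M := 4 * z ^+ 2 * S + 2 * z * D ^+ 3.
have S0 : 0 <= S by rewrite SE sqr_ge0.
have NM : N <= M.
  rewrite /N /M; have : d * S <= z * D * S by apply: ler_wpM2r.
  rewrite SE; nra.
have M0 : 0 <= M by rewrite /M; rewrite addr_ge0 // ?mulr_ge0 // ?exprn_ge0 //.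
have c0 : 0 < a^-1 ^+ 2 * b^-1 by rewrite mulr_gt0 // exprn_gt0.
apply: le_trans (_ : N * (a^-1 ^+ 2 * b^-1) <= _).
  by apply: ler_wpM2r; [exact: ltW|rewrite gerBl mulr_ge0 // ltW].
apply: le_trans (_ : M * (a^-1 ^+ 2 * b^-1) <= _).
  by apply: ler_wpM2r => //; exact: ltW.
have -> : k * a^-1 ^+ 3 * M = M * (a^-1 ^+ 2 * (k * a^-1)) by ring.
apply: ler_wpM2l => //; apply: ler_wpM2l => //; rewrite exprn_ge0 // ltW //.
Qed.

Lemma amgm (s D : R) : 0 < s -> 0 <= D ->
  D ^+ 3 <= (s * D ^+ 2 + D ^+ 4 / s) / 2.
Proof.
move=> s0 D0.
have E : (s * D ^+ 2 + D ^+ 4 / s) / 2 - D ^+ 3 = D ^+ 2 * (s - D) ^+ 2 / (2 * s).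
  by field; apply/lt0r_neq0.
rewrite -subr_ge0 E; apply: divr_ge0; first by rewrite mulr_ge0 // sqr_ge0.
by rewrite mulr_ge0 // ltW.
Qed.

Lemma fin1 (q z w : R) : 0 <= q -> 0 <= z -> q * z <= 1 -> 0 < w ->
  q ^+ 6 * (4 * z ^+ 2 + z * (z + w)) * (z ^+ 2 + w ^+ 2) <=
  6 * (q ^+ 2 + q ^+ 4 * w ^+ 2 + q ^+ 5 * w ^+ 3).
Proof.
move=> q0 z0 qz w0.
set t := q * z.
have t0 : 0 <= t by rewrite mulr_ge0.
have t1 : t ^+ 2 <= 1 by rewrite expr_le1.
have t3 : t ^+ 3 <= 1 by rewrite expr_le1.
have t4 : t ^+ 4 <= 1 by rewrite expr_le1.
have q2 : 0 <= q ^+ 2 by rewrite exprn_ge0.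
have E : q ^+ 6 * (4 * z ^+ 2 + z * (z + w)) * (z ^+ 2 + w ^+ 2) =
  5 * q ^+ 2 * t ^+ 4 + 5 * q ^+ 4 * w ^+ 2 * t ^+ 2 + q ^+ 3 * w * t ^+ 3
   + q ^+ 5 * w ^+ 3 * t by rewrite /t; ring.
rewrite E.
have h1 : q ^+ 2 * t ^+ 4 <= q ^+ 2 by apply: ler_piMr.
have h2 : q ^+ 4 * w ^+ 2 * t ^+ 2 <= q ^+ 4 * w ^+ 2
  by apply: ler_piMr => //; pos.
have h3 : q ^+ 3 * w * t ^+ 3 <= q ^+ 3 * w
  by apply: ler_piMr => //; pos.
have h4 : q ^+ 5 * w ^+ 3 * t <= q ^+ 5 * w ^+ 3
  by apply: ler_piMr => //; pos.
have h5 : 2 * (q ^+ 3 * w) <= q ^+ 2 + q ^+ 4 * w ^+ 2.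
  have : 0 <= (q - q ^+ 2 * w) ^+ 2 by rewrite sqr_ge0.
  have -> : (q - q ^+ 2 * w) ^+ 2 = q ^+ 2 + q ^+ 4 * w ^+ 2 - 2 * (q ^+ 3 * w) by ring.
  by rewrite subr_ge0.
have h6 : 0 <= q ^+ 5 * w ^+ 3 by pos.
move: h1 h2 h3 h4 h5 h6.
set A1 := q ^+ 2 * t ^+ 4; set A2 := q ^+ 4 * w ^+ 2 * t ^+ 2.
set A3 := q ^+ 3 * w * t ^+ 3; set A4 := q ^+ 5 * w ^+ 3 * t.
set B1 := q ^+ 2; set B2 := q ^+ 4 * w ^+ 2; set B3 := q ^+ 3 * w; set B4 := q ^+ 5 * w ^+ 3.
have -> : 5 * B1 * t ^+ 4 = 5 * A1 by rewrite /A1 mulrA.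
have -> : 5 * q ^+ 4 * w ^+ 2 * t ^+ 2 = 5 * A2 by rewrite /A2 !mulrA.
have : 0 <= B1 by rewrite /B1; pos.
have : 0 <= B2 by rewrite /B2; pos.
move=> *; lra.
Qed.

Lemma fin2 (q z w : R) : 0 <= q -> 0 <= z -> q * z <= 1 -> 0 < w ->
  q ^+ 6 * z / (z + w) * (z ^+ 4 + w ^+ 4) <= q ^+ 2 + q ^+ 5 * w ^+ 3.
Proof.
move=> q0 z0 qz w0.
have s0 : 0 < z + w by rewrite ltr_wpDl.
have A : z / (z + w) * (z ^+ 4 + w ^+ 4) <= z ^+ 4 + z * w ^+ 3.
  rewrite mulrAC ler_pdivrMr //.
  have : 0 <= z ^+ 4 * w + z ^+ 2 * w ^+ 3 by rewrite addr_ge0 // mulr_ge0 // ?exprn_ge0 // ltW.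
  set X := _ + _; move=> X0.
  have -> : (z ^+ 4 + z * w ^+ 3) * (z + w) = z * (z ^+ 4 + w ^+ 4) + X by rewrite /X; ring.
  by rewrite lerDl.
have -> : q ^+ 6 * z / (z + w) * (z ^+ 4 + w ^+ 4) = q ^+ 6 * (z / (z + w) * (z ^+ 4 + w ^+ 4)) by ring.
apply: le_trans (_ : q ^+ 6 * (z ^+ 4 + z * w ^+ 3) <= _).
  by apply: ler_wpM2l => //; rewrite exprn_ge0.
set t := q * z.
have t0 : 0 <= t by rewrite mulr_ge0.
have -> : q ^+ 6 * (z ^+ 4 + z * w ^+ 3) = q ^+ 2 * t ^+ 4 + q ^+ 5 * w ^+ 3 * t by rewrite /t; ring.
apply: lerD; apply: ler_piMr; rewrite ?mulr_ge0 ?exprn_ge0 ?expr_le1 // ltW //.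
Qed.

End R1.
Arguments ptw {R}.
Arguments amgm {R}.
Arguments fin1 {R}.
Arguments fin2 {R}.

Lemma inv_le_k (R : realType) (A B k : R) : 0 < A -> 0 < B -> A <= k * B ->
  B^-1 <= k * A^-1.
Proof.
move=> A0 B0 AB.
have E : k * A^-1 - B^-1 = (k * B - A) / (A * B).
  by field; apply/andP; split; apply/lt0r_neq0.
by rewrite -subr_ge0 E divr_ge0 ?subr_ge0 // mulr_ge0 // ltW.
Qed.

Lemma int_le_nm (R : realType) (d : measure_display) (U : measurableType d)
  (mu : {measure set U -> \bar R}) (G g : U -> R) :
  (forall u, G u <= g u) -> (forall u, 0 <= g u) ->
  (\int[mu]_(u in setT) (G u)%:E <= \int[mu]_(u in setT) (g u)%:E)%E.
Proof.
move=> Gg g0.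
rewrite integralE.
apply: (@le_trans _ _ (\int[mu]_(u in setT) ((fun u => (G u)%:E)^\+ u) + 0)%E).
  apply: leeD => //; rewrite oppe_le0; apply: integral_ge0 => u _; exact: funeneg_ge0.
rewrite adde0 !ge0_integralTE; first last.
- by move=> u; exact: funepos_ge0.
- by move=> u; rewrite lee_fin.
apply: ereal_sup_le => _ [hh /= Hh <-]; exists hh => //= u.
apply: le_trans (Hh u) _; rewrite funeposE ge_max !lee_fin Gg g0 //.
Qed.

Theorem lemma4p1 (R : realType) (m : nat)
    (d : measure_display) (U : measurableType d)
    (mu : {measure set U -> \bar R})
    (h : 'rV[R]_m -> U -> 'rV[R]_m)
    (K : R) (Lambda : U -> 'rV[R]_m -> 'rV[R]_m)
    (sigma K0 : R) (C : R -> R) :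
  sigma_finite setT mu ->
  (forall x (i : 'I_m), measurable_fun setT (fun u => h x u 0 i)) ->
  (* (i) *)
  0 < K ->
  (forall u, continuous (fun x : 'rV[R]_m => x + h x u)) ->
  (forall u, cancel (fun x => x + h x u) (Lambda u)) ->
  (forall u, cancel (Lambda u) (fun x => x + h x u)) ->
  (forall u x, enorm (Lambda u x) <= K * (1 + enorm x)) ->
  (forall u x y, enorm (Lambda u x - Lambda u y) <= K * enorm (x - y)) ->
  (* (ii) *)
  0 < sigma -> expR 1 <= K0 ->
  (forall p : R, 1 <= p -> forall N : nat, K0 < N%:R ->
     forall x y, enorm x <= N%:R -> enorm y <= N%:R ->
     (\int[mu]_(u in setT) (enorm (h x u - h y u) `^ (2 * p))%:E <=
      (C p * ln N%:R * enorm (x - y) `^ (2 * p)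
       + C p * ln N%:R / N%:R `^ (2 * sigma * p))%:E)%E) ->
  (* conclusion (1) *)
  (forall eps : R, 0 < eps -> forall x x' u,
     Feps eps (x - x' + h x u - h x' u) <= (1 + K ^+ 2) * Feps eps (x - x'))
  /\
  (* conclusion (2); c' chosen before eps, hence independent of it *)
  (exists c' : R, forall eps : R, 0 < eps ->
     forall N : nat, K0 < N%:R ->
     forall x x', enorm x <= N%:R -> enorm x' <= N%:R ->
     (\int[mu]_(u in setT)
        (Feps eps (x - x' + h x u - h x' u) - Feps eps (x - x')
         - 'D_(h x u - h x' u) (Feps eps) (x - x'))%:E <=
      (c' * (ln N%:R * Feps eps (x - x')
             + ln N%:R * Feps eps (x - x') ^+ 2 / N%:R `^ (2 * sigma)
             + ln N%:R * Feps eps (x - x') `^ (5 / 2) / N%:R `^ (3 * sigma)))%:E)%E).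
Proof.
move=> sf mh K_gt0 cont can1 can2 LamB LamL sig0 eK0 Hint.
have P1 : forall eps : R, 0 < eps -> forall x x' u,
    Feps eps (x - x' + h x u - h x' u) <= (1 + K ^+ 2) * Feps eps (x - x').
  move=> eps e0 x x' u.
  have E : x - x' + h x u - h x' u = (x + h x u) - (x' + h x' u).
    by rewrite opprD addrACA addrA.
  have Hz : enorm (x - x') <= K * enorm (x - x' + h x u - h x' u).
    by rewrite E; have := LamL u (x + h x u) (x' + h x' u); rewrite !can1.
  rewrite /Feps; apply: inv_le_k.
  - by rewrite ltr_pwDl // sqr_ge0.
  - by rewrite ltr_pwDl // sqr_ge0.
  have z0 := enorm_ge0 (x - x').
  have D0 := enorm_ge0 (x - x' + h x u - h x' u).
  move: Hz; set z := enorm _; set D := enorm _ => Hz.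
  have : z ^+ 2 <= (K * D) ^+ 2 by rewrite ler_sqr // nnegrE ?mulr_ge0 // ltW.
  nra.
split; first exact: P1.
pose k := 1 + K ^+ 2.
have k0 : 0 <= k by rewrite /k addr_ge0 // sqr_ge0.
exists (k * (6 * `|C 1| + `|C 2|)).
move=> eps e0 N HN x x' Hx Hx'.
have H1 := Hint 1 (lexx _) N HN x x' Hx Hx'.
have H2 := Hint 2 (ler1n _ 2) N HN x x' Hx Hx'.
set y := x - x'.
set F := Feps eps y.
set L := ln N%:R.
have N1 : (1 : R) < N%:R.
  apply: (lt_trans _ HN); apply: (lt_le_trans _ eK0).
  by apply: (lt_le_trans _ (expR_ge1Dx 1)); rewrite ltrDl.
have L0 : 0 <= L by rewrite /L ln_ge0 // ltW.
pose P := N%:R `^ sigma.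
have P0 : 0 < P by rewrite /P powR_gt0 // (lt_trans _ N1).
pose w := P^-1.
have w0 : 0 < w by rewrite /w invr_gt0.
pose z := enorm y.
have z0 : 0 <= z := enorm_ge0 y.
have a0 : 0 < eps + z ^+ 2 by rewrite ltr_pwDl // sqr_ge0.
have F0 : 0 < F by rewrite /F /Feps invr_gt0.
pose q := Num.sqrt F.
have q0 : 0 <= q := sqrtr_ge0 F.
have Fq : F = q ^+ 2 by rewrite sqr_sqrtr // ltW.
have qz : q * z <= 1.
  have : (q * z) ^+ 2 <= 1.
    rewrite exprMn -Fq /F /Feps -/z mulrC ler_pdivrMr // mul1r.
    by rewrite lerDr ltW.
  by rewrite expr_le1 // mulr_ge0.
pose s := z + w.
have s0 : 0 < s by rewrite /s ltr_wpDl.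
pose S u := enorm (h x u - h x' u) ^+ 2.
pose c2 := k * q ^+ 6 * (4 * z ^+ 2 + z * s).
pose c4 := k * q ^+ 6 * z / s.
have c20 : 0 <= c2 by rewrite /c2; pos.
have c40 : 0 <= c4 by rewrite /c4; apply: divr_ge0; pos.
have S0 u : 0 <= S u by rewrite /S sqr_ge0.
have PW : forall u, Feps eps (y + h x u - h x' u) - F - 'D_(h x u - h x' u) (Feps eps) y
     <= c2 * S u + c4 * S u ^+ 2.
  move=> u.
  set Dv := h x u - h x' u.
  have Ey : y + h x u - h x' u = y + Dv by rewrite -addrA.
  have HP1 := P1 eps e0 x x' u; rewrite -/y Ey in HP1.
  rewrite Ey Feps_D //.
  have D0 := enorm_ge0 Dv.
  have Eb : eps + enorm (y + Dv) ^+ 2 = eps + z ^+ 2 + 2 * dotv y Dv + S u.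
    by rewrite enorm_add /S -/Dv /z; ring.
  have H := ptw (eps + z ^+ 2) (eps + enorm (y + Dv) ^+ 2) (dotv y Dv) (S u) (enorm Dv) z k
    a0 (ltr_pwDl e0 (sqr_ge0 _)) Eb erefl D0 z0 (dot_sq _ _) (dot_le _ _) HP1.
  apply: le_trans H _.
  rewrite -/(Feps eps y) -/F Fq -exprM.
  have A := amgm _ _ s0 D0.
  have -> : c2 * S u + c4 * S u ^+ 2 =
    k * q ^+ (2 * 3) * (4 * z ^+ 2 * S u + z * (s * enorm Dv ^+ 2 + enorm Dv ^+ 4 / s)).
    rewrite /c2 /c4 /S -/Dv; field; exact: lt0r_neq0.
  apply: ler_wpM2l; first by pos.
  rewrite lerD2l.
  have -> : 2 * z * enorm Dv ^+ 3 = z * (2 * enorm Dv ^+ 3) by ring.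
  apply: ler_wpM2l => //.
  by rewrite mulrC -ler_pdivlMr.
have g0 u : 0 <= c2 * S u + c4 * S u ^+ 2.
  by rewrite addr_ge0 // mulr_ge0 // exprn_ge0.
apply: le_trans (int_le_nm _ _ _ mu _ _ PW g0) _.
have mS : measurable_fun setT S.
  have -> : S = (fun u => \sum_(i < m) (h x u 0 i - h x' u 0 i) ^+ 2).
    apply/funext => u; rewrite /S enorm2; apply: eq_bigr => i _; rewrite mxE.
    by rewrite !mxE.
  refine (measurable_sum _ _) => i.
  apply: measurable_realfun.measurable_funX; apply: measurable_realfun.measurable_funB; exact: mh.
have mS2 : measurable_fun setT (fun u => S u ^+ 2) := measurable_realfun.measurable_funX 2 mS.
have E : (\int[mu]_(u in setT) (c2 * S u + c4 * S u ^+ 2)%:E =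
    c2%:E * \int[mu]_(u in setT) (S u)%:E + c4%:E * \int[mu]_(u in setT) (S u ^+ 2)%:E)%E.
  under eq_integral do rewrite EFinD.
  rewrite ge0_integralD //; first last.
  - by apply/measurable_realfun.measurable_EFinP; apply: measurable_realfun.measurable_funM => //; exact: measurable_cst.
  - by move=> u _; rewrite lee_fin mulr_ge0 // exprn_ge0.
  - by apply/measurable_realfun.measurable_EFinP; apply: measurable_realfun.measurable_funM => //; exact: measurable_cst.
  - by move=> u _; rewrite lee_fin mulr_ge0.
  under eq_integral => u _ do rewrite (EFinM c2 (S u)).
  rewrite ge0_integralZl_EFin //; last 2 first.
  - by move=> u _; rewrite lee_fin.
  - exact/measurable_realfun.measurable_EFinP.
  rewrite [X in (_ + X = _)%E](eq_integral (fun u => c4%:E * (S u ^+ 2)%:E))%E; last first.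
    by move=> u _; rewrite EFinM.
  rewrite ge0_integralZl_EFin //.
  - by move=> u _; rewrite lee_fin exprn_ge0.
  - exact/measurable_realfun.measurable_EFinP.
rewrite E.
have PP : 0 <= N%:R `^ sigma by apply: powR_ge0.
have EP2 : N%:R `^ (2 * sigma) = P ^+ 2 by rewrite mulrC powRrM powR_mulrn.
have EP3 : N%:R `^ (3 * sigma) = P ^+ 3 by rewrite mulrC powRrM powR_mulrn.
have EP4 : N%:R `^ (2 * sigma * 2) = P ^+ 4.
  by rewrite (_ : 2 * sigma * 2 = sigma * 4%:R) ?powRrM ?powR_mulrn //; ring.
have I1 : (\int[mu]_(u in setT) (S u)%:E <= (C 1 * L * z ^+ 2 + C 1 * L * w ^+ 2)%:E)%E.
  move: H1; rewrite !mulr1 EP2.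
  rewrite (eq_integral (fun u => (S u)%:E)); last first.
    by move=> u _; rewrite powR_mulrn // enorm_ge0.
  by rewrite powR_mulrn ?enorm_ge0 // -/y -/z -/L /w exprVn.
have I2 : (\int[mu]_(u in setT) (S u ^+ 2)%:E <= (C 2 * L * z ^+ 4 + C 2 * L * w ^+ 4)%:E)%E.
  move: H2; rewrite EP4 (_ : 2 * 2 = 4%:R :> R); last by ring.
  rewrite (eq_integral (fun u => (S u ^+ 2)%:E)); last first.
    by move=> u _; rewrite powR_mulrn ?enorm_ge0 // /S -exprM.
  by rewrite powR_mulrn ?enorm_ge0 // -/y -/z -/L /w exprVn.
apply: le_trans (leeD (lee_wpmul2l _ I1) (lee_wpmul2l _ I2)) _; try by rewrite lee_fin.
rewrite -!EFinM -EFinD lee_fin.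
have EF5 : F `^ (5 / 2) = q ^+ 5.
  rewrite Fq -(@powR_mulrn _ q 2 q0) -powRrM.
  by rewrite (_ : 2%:R * (5 / 2) = 5%:R :> R) ?powR_mulrn //; field.
rewrite EP2 EP3 EF5 Fq.
have B1 : C 1 * L * z ^+ 2 + C 1 * L * w ^+ 2 <= `|C 1| * (L * (z ^+ 2 + w ^+ 2)).
  rewrite (_ : _ + _ = C 1 * (L * (z ^+ 2 + w ^+ 2))); last by ring.
  by apply: ler_wpM2r; [pos|exact: ler_norm].
have B2 : C 2 * L * z ^+ 4 + C 2 * L * w ^+ 4 <= `|C 2| * (L * (z ^+ 4 + w ^+ 4)).
  rewrite (_ : _ + _ = C 2 * (L * (z ^+ 4 + w ^+ 4))); last by ring.
  by apply: ler_wpM2r; [pos|exact: ler_norm].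
apply: le_trans (lerD (ler_wpM2l c20 B1) (ler_wpM2l c40 B2)) _.
have X1 := fin1 q z w q0 z0 qz w0.
have Y1 := fin2 q z w q0 z0 qz w0.
set T := q ^+ 2 + q ^+ 4 * w ^+ 2 + q ^+ 5 * w ^+ 3.
have -> : k * (6 * `|C 1| + `|C 2|) *
    (L * q ^+ 2 + L * (q ^+ 2) ^+ 2 / P ^+ 2 + L * q ^+ 5 / P ^+ 3) =
    k * `|C 1| * L * (6 * T) + k * `|C 2| * L * T.
  by rewrite /T /w; field; exact: lt0r_neq0.
have -> : c2 * (`|C 1| * (L * (z ^+ 2 + w ^+ 2))) + c4 * (`|C 2| * (L * (z ^+ 4 + w ^+ 4))) =
    k * `|C 1| * L * (q ^+ 6 * (4 * z ^+ 2 + z * (z + w)) * (z ^+ 2 + w ^+ 2)) +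
    k * `|C 2| * L * (q ^+ 6 * z / (z + w) * (z ^+ 4 + w ^+ 4)).
  by rewrite /c2 /c4 /s; ring.
have T0 : q ^+ 2 + q ^+ 5 * w ^+ 3 <= T.
  by rewrite /T -addrA lerD2l lerDr; pos.
apply: lerD; apply: ler_wpM2l; try by pos.
exact: (le_trans Y1 T0).
Qed.
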